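(* Let $m\ge3$, $C$ a set of $m$ candidates, $T$ the set of all $m!$ strict rankings of $C$, and $w=(w_1,\dots,w_m)$ with $1=w_1\ge\cdots\ge w_m=0$; for $t\in T$, $\alpha\in C$ let $\sigma_t(\alpha)=w_i$ where $i$ is the position of $\alpha$ in $t$. Suppose $n$ voters each independently choose a ranking uniformly from $T$, let $N_t$ be the number choosing $t$, and $|\alpha|=\sum_t N_t\sigma_t(\alpha)$. Let $$K=\begin{cases}2\,m!\,(1-w_{m-1})^{-1}, & w_{m-1}<1,\\ 0, & w_{m-1}=1.\end{cases}$$ Then with probability 1 the following holds: if some candidate $a$ satisfies $|a|>|\alpha|$ for all $\alpha\ne a$, then for every $\beta\neq a$, $$Q_1(\beta)\le Q_2(\beta)+K,$$ where $Q_1(\beta)$ and $Q_2(\beta)$ are defined as follows. Let $\bar T_{\beta a}$ be the set of types ranking $\beta$ above $a$, and $T_\beta$ the set of types ranking $\beta$ first. $Q_1(\beta)$ is the optimal value (or $+\infty$ if infeasible) of the integer linear program: minimize $\sum_{t\in\bar T_{\beta a}}x_t$ subject to $$\sum_{t\in T_\beta}y_t(1-\sigma_t(\alpha))-\sum_{t\in\bar T_{\beta a}}x_t(\sigma_t(\beta)-\sigma_t(\alpha))\ge |\alpha|-|\beta|\quad\forall\alpha\ne\beta,$$ $\sum_{t\in T_\beta}y_t=\sum_{t\in\bar T_{\beta a}}x_t$, $0\le x_t\le N_t$ for $t\in\bar T_{\beta a}$, $y_t\ge0$ for $t\in T_\beta$, and all $x_t,y_t$ integers. $Q_2(\beta)$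 is the optimal value (or $+\infty$ if infeasible) of the same program with the integrality constraints removed and the constraint $0\le x_t\le N_t$ replaced by $0\le x_t\le N_t-K$.
   Context: Voters' rankings (''types'') are drawn under the Impartial Culture model: each of the $n$ voters independently picks one of the $m!$ rankings with equal probability. *)

(* Defs.v *)
From HB Require Import structures.
From mathcomp Require Import all_boot all_order all_algebra all_fingroup.
From mathcomp Require Import boolp classical_sets reals constructive_ereal ereal.
Set Implicit Arguments. Unset Strict Implicit. Unset Printing Implicit Defensive.
Import Order.TTheory GRing.Theory Num.Theory.
Local Open Scope ring_scope.

(* Types (strict rankings): t : {perm 'I_m}, read as
   "t i is the candidate at position i" (position 0 = top).
   So the (0-based) position of candidate c in t is (t^-1 c).
   Weights: w : nat -> R, w i is the weight of (0-based) position i,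
   i.e. the paper's w_{i+1}. *)

Section Voting.
Variables (R : realType) (m : nat) (w : nat -> R) (n : nat).
Implicit Types (t : {perm 'I_m}) (c : 'I_m).

Definition sigma t c : R := w (val ((t^-1)%g c)).

Variable p : {ffun 'I_n -> {perm 'I_m}}.

Definition Ncount t : nat := #|[set i | p i == t]|.

Definition score c : R := \sum_t (Ncount t)%:R * sigma t c.

Definition above t b c : bool := (val ((t^-1)%g b) < val ((t^-1)%g c))%N.
Definition first t b : bool := val ((t^-1)%g b) == 0%N.

(* K = 2 m! / (1 - w_{m-1}) if w_{m-1} < 1, else 0; w_{m-1} is w (m-2) here *)
Definition Kconst : R :=
  if w (m - 2)%N < 1 then 2 * (m`!)%:R / (1 - w (m - 2)%N) else 0.

Definition feasible (a b : 'I_m) (ub : {perm 'I_m} -> R) (integral : bool)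
    (x y : {perm 'I_m} -> R) : Prop :=
  [/\ (forall c, c != b ->
         \sum_(t | first t b) y t * (1 - sigma t c)
         - \sum_(t | above t b a) x t * (sigma t b - sigma t c)
         >= score c - score b),
      \sum_(t | first t b) y t = \sum_(t | above t b a) x t,
      (forall t, above t b a -> 0 <= x t <= ub t),
      (forall t, first t b -> 0 <= y t) &
      (integral -> (forall t, above t b a -> x t \is a Num.int) /\
                   (forall t, first t b -> y t \is a Num.int))].

(* Optimal value (infimum of objective over feasible points; +oo if infeasible) *)
Definition progval (a b : 'I_m) (ub : {perm 'I_m} -> R) (integral : bool)
    : \bar R :=
  ereal_inf [set ((\sum_(t | above t b a) x t)%:E) | x in
               [set x | exists y, feasible a b ub integral x y]].

Definition Q1 (a b : 'I_m) : \bar R :=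
  progval a b (fun t => (Ncount t)%:R) true.

Definition Q2 (a b : 'I_m) : \bar R :=
  progval a b (fun t => (Ncount t)%:R - Kconst) false.

Definition prop5_event : Prop :=
  forall a : 'I_m, (forall c, c != a -> score c < score a) ->
  forall b : 'I_m, b != a -> (Q1 a b <= Q2 a b + Kconst%:E)%E.

End Voting.

(* Probability of an event under Impartial Culture: each profile
   p : 'I_n -> {perm 'I_m} has probability (1/m!)^n. *)
Definition IC_prob (R : realType) (m n : nat)
    (E : {ffun 'I_n -> {perm 'I_m}} -> Prop) : R :=
  \sum_(p : {ffun 'I_n -> {perm 'I_m}} | `[< E p >]) ((m`!)%:R^-1) ^+ n.

(* Main.v *)
Require Import Defs.
From HB Require Import structures.
From mathcomp Require Import all_boot all_order all_algebra all_fingroup.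
From mathcomp Require Import boolp classical_sets reals constructive_ereal ereal.
From mathcomp Require Import zify ring lra.
From mathcomp Require Import classical_sets.
Import Order.TTheory GRing.Theory Num.Theory.
Local Open Scope ring_scope.

Section P5.
Variables (R : realType) (k : nat) (w : nat -> R) (n : nat).
Local Notation m := k.+3.
Hypothesis w0 : w 0%N = 1.
Hypothesis wl : w k.+2 = 0.
Hypothesis wmono : forall i j : nat, (i <= j)%N -> (j < m)%N -> w j <= w i.
Variable p : {ffun 'I_n -> {perm 'I_m}}.

Lemma sigma_ge0 (t : {perm 'I_m}) c : 0 <= sigma w t c.
Proof. rewrite /sigma -wl; apply: wmono => //; rewrite -ltnS; exact: ltn_ord. Qed.

Lemma sigma_le1 (t : {perm 'I_m}) c : sigma w t c <= 1.
Proof. rewrite /sigma -w0; apply: wmono => //; exact: ltn_ord. Qed.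

Lemma sigma_mono (t t' : {perm 'I_m}) c c' :
  (val ((t^-1)%g c) <= val ((t'^-1)%g c'))%N -> sigma w t' c' <= sigma w t c.
Proof. move=> h; rewrite /sigma; apply: wmono => //; exact: ltn_ord. Qed.

Lemma exists_t0 (a b : 'I_m) : b != a ->
  exists t0 t1 : {perm 'I_m},
    [/\ val ((t0^-1)%g b) = k.+1, val ((t0^-1)%g a) = k.+2,
        val ((t1^-1)%g b) = 0%N &
        forall c, c != b -> (val ((t0^-1)%g c) <= val ((t1^-1)%g c))%N].
Proof.
move=> hba.
pose pm1 : 'I_m := ord_max. pose pm2 : 'I_m := inord k.+1. pose p0 : 'I_m := ord0.
have v2 : val pm2 = k.+1 by rewrite /pm2 /= inordK.
pose v1 := tperm a pm1.
pose v := (v1 * tperm (v1 b) pm2)%g.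
pose v' := (v * tperm pm2 p0)%g.
exists (v^-1)%g, (v'^-1)%g; rewrite !invgK.
have vb : v b = pm2 by rewrite permM tpermL.
have v1a : v1 a = pm1 by rewrite tpermL.
have v1b : v1 b != pm1 by rewrite -v1a (inj_eq perm_inj).
have p12 : pm1 != pm2 by apply/eqP => /(congr1 val); rewrite v2 /=; lia.
split.
- by rewrite vb.
- by rewrite permM v1a tpermD // eq_sym.
- by rewrite permM vb tpermL.
move=> c hcb.
have vc : v c != pm2 by rewrite -vb (inj_eq perm_inj).
have -> : v' c = tperm pm2 p0 (v c) by rewrite /v' permM.
case: (tpermP pm2 p0 (v c)) => [h|h|h1 h2].
- by move: vc; rewrite h eqxx.
- by rewrite h v2 /=.
- by [].
Qed.


Lemma first_above (t : {perm 'I_m}) (a b : 'I_m) : b != a -> first t b -> above t b a.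
Proof.
move=> hba /eqP h0; rewrite /above h0 lt0n; apply/eqP => ha.
have : (t^-1)%g a = (t^-1)%g b by apply: val_inj; rewrite /= ha h0.
by move/perm_inj/eqP; rewrite eq_sym (negbTE hba).
Qed.

Lemma card_above (a b : 'I_m) : b != a ->
  (2 * #|(finset (fun t : {perm 'I_m} => above t b a))| <= m`!)%N.
Proof.
move=> hba; set A := (finset (fun t : {perm 'I_m} => above t b a)).
pose phi (t : {perm 'I_m}) := (t * tperm a b)%g.
have phiI : injective phi by move=> t1 t2; apply: mulIg.
have phiV t c : ((phi t)^-1)%g c = (t^-1)%g (tperm a b c).
  by rewrite /phi invgM tpermV permM.
have sub : (phi @: A) \subset ~: A.
  apply/fintype.subsetP => _ /imsetP [t tA ->]; rewrite !inE /above !phiV tpermR tpermL.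
  move: tA; rewrite inE /above => h; rewrite -leqNgt; exact: ltnW.
have := subset_leq_card sub; rewrite card_imset //.
have := cardsC A; rewrite card_Sn; lia.
Qed.


Definition fl (r : R) : R := (Num.floor r)%:~R.
Lemma fl_le r : fl r <= r. Proof. exact: floor_le. Qed.
Lemma fl_gt r : r - 1 < fl r.
Proof. have := floorD1_gt r; rewrite intrD /fl; lra. Qed.
Lemma fl_ge0 r : 0 <= r -> 0 <= fl r.
Proof. by move=> h; rewrite /fl ler0z floor_ge0. Qed.
Lemma fl_int r : fl r \is a Num.int. Proof. exact: intr_int. Qed.

Lemma sum_ind (P : pred {perm 'I_m}) t0 (F : {perm 'I_m} -> R) : P t0 ->
  \sum_(t | P t) (t == t0)%:R * F t = F t0.
Proof.
move=> h; rewrite (bigD1 t0) //= eqxx mul1r big1 ?addr0 // => i /andP [_ /negbTE ->].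
by rewrite mul0r.
Qed.

Lemma lhs_rw (a b al : 'I_m) (x y : {perm 'I_m} -> R) (A0 : R) :
  \sum_(t | first t b) y t = \sum_(t | above t b a) x t ->
  \sum_(t | first t b) y t * (1 - sigma w t al)
    - \sum_(t | above t b a) x t * (sigma w t b - sigma w t al)
  = \sum_(t | first t b) y t * ((1 - sigma w t al) - A0)
    + \sum_(t | above t b a) x t * (A0 - (sigma w t b - sigma w t al)).
Proof.
move=> hs.
under [X in _ = X + _]eq_bigr do rewrite mulrBr.
under [X in _ = _ + X]eq_bigr do rewrite mulrBr.
rewrite !sumrB -!mulr_suml hs; ring.
Qed.


Lemma arith1 (S F G kk K nA f : R) : S - nA <= F -> G <= S -> nA <= f ->
  K - 1 < kk -> 2 * f <= K -> 1 <= f -> 0 <= F + kk - G.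
Proof. lra. Qed.

Lemma bnd1 (Y F V : R) : Y - 1 < F -> F <= Y -> -1 <= V -> V <= 1 -> Y * V - 1 <= F * V.
Proof. move=> *; nra. Qed.
Lemma bnd2 (Y F V : R) : Y - 1 < F -> F <= Y -> -1 <= V -> V <= 2 -> Y * V - 2 <= F * V.
Proof. move=> *; nra. Qed.
Lemma arith2 (d Ly Lx Ly' Lx' P Q K c f nA nB : R) :
  d <= Ly + Lx -> Ly - nB <= Ly' -> Lx - 2 * nA + P <= Lx' ->
  Q <= P -> K * c - c <= Q -> K * c = 2 * f -> c <= 1 -> nB <= nA -> 2 * nA <= f ->
  2 <= f -> d <= Ly' + Lx'.
Proof. move=> *; lra. Qed.

Lemma arith3 (u v c : R) : u - v + c <= u -> c <= v.
Proof. lra. Qed.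

Lemma case_pos (a b : 'I_m) (hba : b != a) (hc : w k.+1 < 1)
    (x y : {perm 'I_m} -> R) :
  feasible w p a b (fun t => (Ncount p t)%:R - Kconst m w) false x y ->
  exists x' y', feasible w p a b (fun t => (Ncount p t)%:R) true x' y' /\
    \sum_(t | above t b a) x' t <= \sum_(t | above t b a) x t + Kconst m w.
Proof.
set K := Kconst m w; set c := 1 - w k.+1.
have KE : K = 2 * (m`!)%:R / c by rewrite /K /Kconst (_ : (m - 2)%N = k.+1) // hc.
have c0 : 0 < c by rewrite /c; lra.
have c1 : c <= 1 by have := @wmono k.+1 k.+2 (leqnSn k.+1) (ltnSn k.+2); rewrite wl /c; lra.
have Kc : K * c = 2 * (m`!)%:R by rewrite KE mulfVK // gt_eqF.
have F2 : (2 <= m`!)%N by rewrite !factS; have := fact_gt0 k; nia.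
have F2R : 2 <= (m`!)%:R :> R by rewrite (ler_nat R 2).
have K2 : 2 * (m`!)%:R <= K by nra.
case=> [hcon hsum hx hy _].
have [t0 [t1 [h0b h0a h1b h1c]]] := @exists_t0 a b hba.
have T1 : first t1 b by rewrite /first h1b.
have T0 : above t0 b a by rewrite /above h0b h0a.
pose kk := fl K.
have kk0 : 0 <= kk by apply: fl_ge0; nra.
have kkK : kk <= K by apply: fl_le.
have kkK1 : K - 1 < kk by apply: fl_gt.
pose x' t := fl (x t) + kk * (t == t0)%:R.
pose y' t := if t == t1 then \sum_(s | above s b a) x' s
     - \sum_(s | first s b && (s != t1)) fl (y s) else fl (y t).
set nA := #|[pred t : {perm 'I_m} | above t b a]|.
set nB := #|[pred t : {perm 'I_m} | first t b]|.
have cA : (2 * nA <= m`!)%N by rewrite /nA -cardsE; exact: card_above.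
have cB : (nB <= nA)%N.
  by apply: subset_leq_card; apply/fintype.subsetP => t; rewrite !inE; apply: first_above.
have sumA (F : {perm 'I_m} -> R) : \sum_(t | above t b a) (F t - 1)
   = \sum_(t | above t b a) F t - nA%:R by rewrite sumrB sumr_const.
have sumA2 (F : {perm 'I_m} -> R) : \sum_(t | above t b a) (F t - 2)
   = \sum_(t | above t b a) F t - 2 * nA%:R by rewrite sumrB sumr_const mulr_natr.
have sumB (F : {perm 'I_m} -> R) : \sum_(t | first t b) (F t - 1)
   = \sum_(t | first t b) F t - nB%:R by rewrite sumrB sumr_const.
have sx' : \sum_(t | above t b a) x' t = \sum_(t | above t b a) fl (x t) + kk.
  rewrite /x' big_split /=; congr (_ + _).
  under eq_bigr do rewrite mulrC.
  by rewrite sum_ind // mulr1.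
have sy' : \sum_(t | first t b) y' t = \sum_(t | above t b a) x' t.
  rewrite (bigD1 t1) //= /y' eqxx.
  rewrite [X in _ + X = _](eq_bigr (fun s => fl (y s))) ?subrK // => i /andP [_ /negbTE ->] //.
exists x', y'; split; last first.
  rewrite sx' lerD //; apply: ler_sum => t _; exact: fl_le.
split.
- move=> al hal.
  set A0 := 1 - sigma w t1 al.
  rewrite (@lhs_rw a b al x' y' A0 sy').
  have hL := hcon al hal; rewrite (@lhs_rw a b al x y A0 hsum) in hL.
  have s0 t := sigma_ge0 t; have s1 t := sigma_le1 t.
  have hB1 : \sum_(t | first t b) y t * ((1 - sigma w t al) - A0) - nB%:R <=
             \sum_(t | first t b) y' t * ((1 - sigma w t al) - A0).
    rewrite -sumB; apply: ler_sum => t tB; rewrite /y'; case: eqP => [->|_].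
      by rewrite /A0 subrr !mulr0 sub0r lerN10.
    apply: bnd1; [exact: fl_gt|exact: fl_le| |];
    have := s0 t al; have := s1 t al; have := s0 t1 al; have := s1 t1 al;
    rewrite /A0; move=> *; lra.
  have hB2 : \sum_(t | above t b a) x t * (A0 - (sigma w t b - sigma w t al)) - 2 * nA%:R
             + kk * (A0 - (sigma w t0 b - sigma w t0 al)) <=
             \sum_(t | above t b a) x' t * (A0 - (sigma w t b - sigma w t al)).
    rewrite /x'; under [X in _ <= X]eq_bigr do rewrite mulrDl -mulrA.
    rewrite big_split /= -mulr_sumr.
    rewrite sum_ind // lerD2r -sumA2; apply: ler_sum => t tA.
    apply: bnd2; [exact: fl_gt|exact: fl_le| |];
    have := s0 t al; have := s1 t al; have := s0 t b; have := s1 t b;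
    have := s0 t1 al; have := s1 t1 al; rewrite /A0; move=> *; lra.
  have hV : c <= A0 - (sigma w t0 b - sigma w t0 al).
    have e0 : sigma w t0 b = w k.+1 by rewrite /sigma h0b.
    have e1 : sigma w t1 al <= sigma w t0 al by apply: sigma_mono; exact: h1c.
    rewrite /A0 e0 /c; lra.
  have hQ : kk * c <= kk * (A0 - (sigma w t0 b - sigma w t0 al)) by apply: ler_wpM2l.
  have hQ2 : K * c - c <= kk * c.
    have := ler_wpM2r (ltW c0) (ltW kkK1); by rewrite mulrBl mul1r.
  apply: (@arith2 _ _ _ _ _ _ _ _ _ (m`!)%:R nA%:R nB%:R hL hB1 hB2 hQ hQ2 Kc c1) => //.
  + by rewrite ler_nat.
  + by rewrite -natrM ler_nat.
- exact: sy'.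
- move=> t tA; have /andP [hx0 hx1] := hx t tA; rewrite /x'.
  have hf0 := @fl_ge0 _ hx0; have hf1 := fl_le (x t).
  case: (t == t0); rewrite ?mulr1 ?mulr0; apply/andP; split; lra.
- move=> t tB; rewrite /y'; case: eqP => _; last by apply: fl_ge0; apply: hy.
  rewrite sx'.
  have h1 : \sum_(t | above t b a) x t - nA%:R <= \sum_(t | above t b a) fl (x t).
    by rewrite -sumA; apply: ler_sum => s _; apply: ltW; apply: fl_gt.
  have h2 : \sum_(s | first s b && (s != t1)) fl (y s) <= \sum_(t | above t b a) x t.
    rewrite -hsum [X in _ <= X](bigD1 t1) //=.
    have : \sum_(s | first s b && (s != t1)) fl (y s) <= \sum_(s | first s b && (s != t1)) y s.
      by apply: ler_sum => s _; apply: fl_le.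
    move/le_trans; apply; rewrite -[X in X <= _]add0r lerD2r; exact: hy.
  have h3 : (nA%:R : R) <= (m`!)%:R by rewrite ler_nat; apply: leq_trans cA; rewrite leq_pmull.
  apply: (@arith1 _ _ _ _ _ _ _ h1 h2 h3 kkK1 K2); by rewrite ler1n fact_gt0.
- move=> _; split => t _.
    by rewrite /x' rpredD ?rpredM ?fl_int ?natr_int.
  rewrite /y'; case: eqP => _; last exact: fl_int.
  rewrite rpredB ?rpred_sum // => s _.
    by rewrite /x' rpredD ?rpredM ?fl_int ?natr_int.
  exact: fl_int.
Qed.


Lemma distrib (I : finType) (P : pred I) (V : I -> nat) (D : nat) :
  (D <= \sum_(i | P i) V i)%N ->
  exists z : I -> nat, (forall i, z i <= V i)%N /\ \sum_(i | P i) z i = D.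
Proof.
elim: D => [|D IH] h.
  by exists (fun=> 0%N); split => //; rewrite big1.
have [z [zV zs]] := IH (ltnW h).
case: (boolP [exists i, P i && (z i < V i)%N]); last first.
  move=> /existsPn hn.
  have : (\sum_(i | P i) V i <= \sum_(i | P i) z i)%N.
    by apply: leq_sum => i Pi; have := hn i; rewrite Pi /= -leqNgt.
  rewrite zs; move: h; lia.
case/existsP => j /andP [Pj lt].
exists (fun i => z i + (i == j))%N; split.
  by move=> i; case: eqP => [->|_]; rewrite ?addn1 ?addn0.
rewrite big_split /= zs (bigD1 j) //= eqxx big1; first by rewrite -addn1; congr (_ + _).
by move=> i /andP [_ /negbTE ->].
Qed.

Section Zero.
Hypothesis w1 : w k.+1 = 1.

Lemma w_one i : (i <= k.+1)%N -> w i = 1.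
Proof.
move=> h; apply/eqP; rewrite eq_le; apply/andP; split.
  rewrite -w0; apply: (@wmono 0%N i) => //; exact: (leq_trans h).
rewrite -w1; apply: (@wmono i k.+1) => //.
Qed.

Lemma sigma_ind (t : {perm 'I_m}) c : sigma w t c = if c == t ord_max then 0 else 1.
Proof.
rewrite /sigma; case: eqP => [->|ne]; first by rewrite permK /= wl.
apply: w_one; rewrite -ltnS; have := ltn_ord ((t^-1)%g c); rewrite leq_eqVlt ltnS.
case/orP => // /eqP h; exfalso; apply: ne.
have -> : ord_max = (t^-1)%g c by apply: val_inj => /=; case: h.
by rewrite permKV.
Qed.

Lemma above_notlast (t : {perm 'I_m}) (a b : 'I_m) : above t b a -> t ord_max != b.
Proof.
rewrite /above => h; apply/eqP => e; move: h; rewrite -e permK /=.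
by rewrite ltnNge -ltnS ltn_ord.
Qed.

Lemma first_notlast (t : {perm 'I_m}) (b : 'I_m) : first t b -> t ord_max != b.
Proof. by rewrite /first => h; apply/eqP => e; move: h; rewrite -e permK. Qed.

Lemma lhs_zero (a b al : 'I_m) (x y : {perm 'I_m} -> R) :
  \sum_(t | first t b) y t * (1 - sigma w t al)
    - \sum_(t | above t b a) x t * (sigma w t b - sigma w t al)
  = \sum_(t | first t b && (t ord_max == al)) y t
    - \sum_(t | above t b a && (t ord_max == al)) x t.
Proof.
rewrite !big_mkcondr /=; congr (_ - _); apply: eq_bigr => t ht.
  by rewrite sigma_ind eq_sym; case: eqP => _; rewrite ?subr0 ?subrr ?mulr1 ?mulr0.
rewrite !sigma_ind eq_sym (negbTE (@above_notlast t a b ht)) eq_sym.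
by case: eqP => _; rewrite ?subr0 ?subrr ?mulr1 ?mulr0.
Qed.

Definition sc (c : 'I_m) : nat := \sum_(t : {perm 'I_m} | t ord_max != c) Ncount p t.

Lemma score_sc c : score w p c = (sc c)%:R.
Proof.
rewrite /score /sc natr_sum [RHS]big_mkcond /=; apply: eq_bigr => t _.
by rewrite sigma_ind eq_sym; case: eqP => _; rewrite ?mulr0 ?mulr1.
Qed.

Lemma tau_ex (b al : 'I_m) : al != b -> exists tau : {perm 'I_m}, first tau b /\ tau ord_max = al.
Proof.
move=> hab; pose pm1 : 'I_m := ord_max; pose p0 : 'I_m := ord0.
pose v1 := tperm al pm1; pose v := (v1 * tperm (v1 b) p0)%g.
exists (v^-1)%g; split.
  by rewrite /first invgK permM tpermL.
have v1a : v1 al = pm1 by rewrite tpermL.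
have v1b : v1 b != pm1 by rewrite -v1a (inj_eq perm_inj) eq_sym.
have va : v al = pm1 by rewrite permM v1a tpermD // eq_sym.
by rewrite -[ord_max]/pm1 -va permK.
Qed.


Lemma case_zero (a b : 'I_m) (hba : b != a) (x y : {perm 'I_m} -> R) :
  feasible w p a b (fun t => (Ncount p t)%:R - Kconst m w) false x y ->
  exists x' y', feasible w p a b (fun t => (Ncount p t)%:R) true x' y' /\
    \sum_(t | above t b a) x' t <= \sum_(t | above t b a) x t + Kconst m w.
Proof.
have K0 : Kconst m w = 0 by rewrite /Kconst (_ : (m - 2)%N = k.+1) // w1 ltxx.
rewrite K0 addr0; case=> [hcon hsum hx hy _].
pose X al := \sum_(t | above t b a && (t ord_max == al)) x t.
pose Y al := \sum_(t | first t b && (t ord_max == al)) y t.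
pose U al := \sum_(t | above t b a && (t ord_max == al)) Ncount p t.
pose cap al := (sc b - sc al)%N.
pose e al := (sc al - sc b)%N.
pose V al := minn (U al) (cap al).
pose D := \sum_(al | al != b) e al.
pose M al := Num.min (X al) (cap al)%:R.
have hx0 t : above t b a -> 0 <= x t by move=> /hx /andP [].
have hxN t : above t b a -> x t <= (Ncount p t)%:R by move=> /hx /andP [_]; rewrite subr0.
have X0 al : 0 <= X al by apply: sumr_ge0 => t /andP [/hx0].
have Y0 al : 0 <= Y al by apply: sumr_ge0 => t /andP [/hy].
have XU al : X al <= (U al)%:R by rewrite /U natr_sum; apply: ler_sum => t /andP [/hxN].
have step1 al : al != b -> (sc al)%:R - (sc b)%:R <= Y al - X al.
  by move=> hal; have := hcon al hal; rewrite !score_sc lhs_zero.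
have sY : \sum_(al | al != b) Y al = \sum_(t | first t b) y t.
  rewrite [RHS](partition_big (fun t : {perm 'I_m} => t ord_max) (fun al => al != b)) //.
  by move=> t ht; exact: (@first_notlast t b ht).
have sX : \sum_(al | al != b) X al = \sum_(t | above t b a) x t.
  rewrite [RHS](partition_big (fun t : {perm 'I_m} => t ord_max) (fun al => al != b)) //.
  by move=> t ht; exact: (@above_notlast t a b ht).
have step3 al : al != b ->
    X al - M al + (e al)%:R <= Y al /\ M al <= (V al)%:R /\ M al <= X al.
  move=> hal; have s1 := step1 al hal.
  have MX : M al <= X al by rewrite /M ge_min lexx.
  have Mc : M al <= (cap al)%:R by rewrite /M ge_min lexx orbT.
  have MV : M al <= (V al)%:R.
    case: (leqP (U al) (cap al)) => h.
      have -> : V al = U al by apply/minn_idPl.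
      by apply: le_trans MX (XU al).
    by have -> : V al = cap al by apply/minn_idPr; apply: ltnW.
  split; last by split.
  have Y0' := Y0 al; have X0' := X0 al.
  rewrite /e /M /cap; case: (leqP (sc b) (sc al)) => h.
    have -> : (sc b - sc al)%N = 0%N by apply/eqP; rewrite subn_eq0.
    rewrite (min_r X0') natrB //; move: s1 Y0' X0'; clear; move=> *; lra.
  have -> : (sc al - sc b)%N = 0%N by apply/eqP; rewrite subn_eq0 ltnW.
  rewrite natrB ?(ltnW h) //.
  case: (lerP (X al) ((sc b)%:R - (sc al)%:R)) => h2.
    move: s1 Y0' X0'; clear; move=> *; lra.
  move: s1 Y0' X0'; clear; move=> *; lra.
have hD1 : (D%:R : R) <= \sum_(al | al != b) M al.
  have h1 : \sum_(al | al != b) (X al - M al + (e al)%:R) <= \sum_(al | al != b) Y al.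
    by apply: ler_sum => al hal; exact: (step3 al hal).1.
  move: h1; rewrite big_split sumrB /= sY sX -hsum /D natr_sum.
  by move/arith3.
have hD2 : \sum_(al | al != b) M al <= \sum_(t | above t b a) x t.
  by rewrite -sX; apply: ler_sum => al hal; exact: (step3 al hal).2.2.
have DV : (D <= \sum_(al | al != b) V al)%N.
  rewrite -(ler_nat R) natr_sum; apply: le_trans hD1 _; apply: ler_sum => al hal.
  exact: (step3 al hal).2.1.
have [z [zV zs]] := @distrib _ _ _ _ DV.
have hG : forall al, exists g : {perm 'I_m} -> nat, (forall t, g t <= Ncount p t)%N /\
    \sum_(t | above t b a && (t ord_max == al)) g t = z al.
  move=> al; apply: distrib; apply: leq_trans (zV al) _; exact: geq_minl.
case: (choice hG) => G hG'.
have hT al : exists tau : {perm 'I_m}, al != b -> first tau b /\ tau ord_max = al.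
  case: (boolP (al != b)) => h; last by exists 1%g.
  by have [tau ht] := @tau_ex b al h; exists tau.
case: (choice hT) => tau htau.
pose x' (t : {perm 'I_m}) : R := ((G (t ord_max)) t)%:R.
pose y' (t : {perm 'I_m}) : R :=
  if first t b && (t == tau (t ord_max)) then ((e (t ord_max))%:R : R) else 0.
have X' al : \sum_(t | above t b a && (t ord_max == al)) x' t = (z al)%:R.
  by rewrite -(proj2 (hG' al)) natr_sum; apply: eq_bigr => t /andP [_ /eqP <-].
have Y' al : al != b -> \sum_(t | first t b && (t ord_max == al)) y' t = (e al)%:R.
  move=> hal; have [f1 f2] := htau al hal.
  rewrite (eq_bigr (fun t => (t == tau al)%:R * (e al)%:R)).
    by rewrite sum_ind // f1 f2 eqxx.
  move=> t /andP [ft /eqP lt]; rewrite /y' ft lt /=.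
  by case: eqP => _; rewrite ?mul1r ?mul0r.
have sx' : \sum_(t | above t b a) x' t = D%:R.
  rewrite (partition_big (fun t : {perm 'I_m} => t ord_max) (fun al => al != b)).
    by rewrite (eq_bigr (fun al => (z al)%:R)) // -natr_sum zs.
  by move=> t ht; exact: (@above_notlast t a b ht).
have sy' : \sum_(t | first t b) y' t = D%:R.
  rewrite (partition_big (fun t : {perm 'I_m} => t ord_max) (fun al => al != b)).
    by rewrite (eq_bigr (fun al => (e al)%:R)) ?natr_sum // => al hal; apply: Y'.
  by move=> t ht; exact: (@first_notlast t b ht).
exists x', y'; split.
  split.
  - move=> al hal; rewrite !score_sc lhs_zero X' (Y' al hal).
    have hz : (z al <= cap al)%N by apply: leq_trans (zV al) (geq_minr _ _).
    move: hz; rewrite /e /cap; case: (leqP (sc b) (sc al)) => h.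
      have -> : (sc b - sc al)%N = 0%N by apply/eqP; rewrite subn_eq0.
      by rewrite leqn0 => /eqP ->; rewrite natrB // subr0.
    have -> : (sc al - sc b)%N = 0%N by apply/eqP; rewrite subn_eq0 ltnW.
    rewrite -(ler_nat R) natrB ?(ltnW h) // sub0r => hz.
    by rewrite lerNr opprB.
  - by rewrite sx' sy'.
  - by move=> t _; rewrite /x' ler0n /= ler_nat; exact: (proj1 (hG' _)).
  - by move=> t _; rewrite /y'; case: ifP => _ //; exact: ler0n.
  - move=> _; split => t _; first exact: natr_int.
    by rewrite /y'; case: ifP => _; [exact: natr_int|exact: rpred0].
by rewrite sx'; apply: le_trans hD1 hD2.
Qed.

End Zero.

End P5.

Theorem proposition5 (R : realType) (m : nat) (w : nat -> R) (n : nat) :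
  (3 <= m)%N ->
  w 0%N = 1 -> w (m - 1)%N = 0 ->
  (forall i j : nat, (i <= j)%N -> (j < m)%N -> w j <= w i) ->
  @IC_prob R m n (fun p => prop5_event w p) = 1.
Proof.
case: m => [|[|[|k]]] // _ w0 wl wmono.
have wl' : w k.+2 = 0 by rewrite -wl.
have ev : forall p : {ffun 'I_n -> {perm 'I_k.+3}}, prop5_event w p.
  move=> p; rewrite /prop5_event => a ha b hba.
  have key : forall x y, feasible w p a b
      (fun t => (Ncount p t)%:R - Kconst k.+3 w) false x y ->
      (Q1 w p a b <= (\sum_(t | above t b a) x t + Kconst k.+3 w)%:E)%E.
    move=> x y hf.
    have [x' [y' [hf' hobj]]] : exists x' y',
        feasible w p a b (fun t => (Ncount p t)%:R) true x' y' /\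
        \sum_(t | above t b a) x' t <= \sum_(t | above t b a) x t + Kconst k.+3 w.
      case: (boolP (w k.+1 < 1)) => hc.
        exact: (@case_pos R k w n w0 wl' wmono p a b hba hc x y hf).
      have w1 : w k.+1 = 1.
        apply/eqP; rewrite eq_le; apply/andP; split; last by rewrite leNgt.
        by rewrite -w0; apply: wmono.
      exact: (@case_zero R k w n w0 wl' wmono p w1 a b hba x y hf).
    apply: (@le_trans _ _ (\sum_(t | above t b a) x' t)%:E); last by rewrite lee_fin.
    by apply: ereal_inf_lbound; exists x' => //; exists y'.
  rewrite /Q2 /progval -leeBlDr //.
  apply/ereal_infP => _ [x [y hf] <-].
  by rewrite leeBlDr // -EFinD; apply: key hf.
rewrite /IC_prob (eq_bigl xpredT); last by move=> q; apply: asboolT.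
rewrite sumr_const card_ffun card_Sn card_ord. rewrite -[X in X = 1]mulr_natr natrX -exprMn mulVf ?expr1n //.
Qed.
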